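(* Let $P\subset\mathbb{R}^d$ be a finite dataset with $|P|=n$, let $s$ be the number of compute nodes, $t<s$, $\delta>0$, and let $A\in\{0,1\}^{s\times n}$ (columns indexed by the points of $P$) satisfy the straggler-resilience property with parameter $\delta$. For $i\in[s]$ let $P_i$ be the set of points of $P$ whose column has a $1$ in row $i$. Let $\mathcal{R}\subseteq[s]$ with $|\mathcal{R}|\ge s-t$ and let $\mathbf{b}=(b_i)_{i\in\mathcal{R}}$ be a corresponding non-negative recovery vector. Let $0<\epsilon<1/3$ and for each $i\in\mathcal{R}$ let $(S_i,w_i)$ be an $\epsilon$-coreset for $P_i$ with respect to a cost function $\mathrm{cost}$ of the form described in the context. Let $S$ be the disjoint union of the $S_i$, $i\in\mathcal{R}$, with weight $w(\mathbf{c})=b_i\,w_i(\mathbf{c})$ for $\mathbf{c}\in S_i$. Then $(S,w)$ is a $2(\epsilon+\delta)$-coreset for $P$, i.e., for every admissible center set $C$, $$(1-2(\epsilon+\delta))\,\mathrm{cost}(P,C)\le\mathrm{cost}(S,C,w)\le(1+2(\epsilon+\delta))\,\mathrm{cost}(P,C).$$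
   Context: The cost function is additive: there is a non-negative function $D(\mathbf{x},C)$ (e.g. $D(\mathbf{x},C)=\min_{\mathbf{c}\in C}\|\mathbf{x}-\mathbf{c}\|_2$ for $k$-median, its square for $k$-means, or the squared distance to the nearest of $k$ $r$-dimensional subspaces for $(r,k)$-subspace clustering) such that for a finite set $Q$ with weights $w$, $\mathrm{cost}(Q,C,w)=\sum_{\mathbf{q}\in Q}w(\mathbf{q})D(\mathbf{q},C)$, and $\mathrm{cost}(Q,C)$ is this with all weights $1$. An $\epsilon$-coreset ($0<\epsilon<1/3$) for a dataset $Q$ is a weighted set $(S',w')$ such that for every center set $C$, $(1-\epsilon)\mathrm{cost}(Q,C)\le\mathrm{cost}(S',C,w')\le(1+\epsilon)\mathrm{cost}(Q,C)$. Straggler-resilience property with parameter $\delta$: for every $\mathcal{R}\subseteq[s]$ with $|\mathcal{R}|\ge s-t$, letting $A_{\mathcal{R}}$ be the rows of $A$ indexed by $\mathcal{R}$, there is $\mathbf{b}\in\mathbb{R}^{|\mathcal{R}|}$ with non-negative entries (a recovery vector) such that $\mathbf{b}^TA_{\mathcal{R}}=(a_1,\ldots,a_n)$ with $1\le a_j\le 1+\delta$ for all $j$. *)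

(* Defs.v *)
From mathcomp Require Import all_boot all_order all_algebra.
Set Implicit Arguments. Unset Strict Implicit. Unset Printing Implicit Defensive.
Import Order.TTheory GRing.Theory Num.Theory.
Local Open Scope ring_scope.

Section Coresets.
Variables (R : realFieldType) (V CT : Type) (D : V -> CT -> R).

Definition cost (Q : seq V) (C : CT) : R := \sum_(q <- Q) D q C.

Definition wcost (S : seq (V * R)) (C : CT) : R := \sum_(q <- S) q.2 * D q.1 C.

Definition wset (S : seq V) (w : V -> R) : seq (V * R) := [seq (c, w c) | c <- S].

Definition is_coreset (eps : R) (Q : seq V) (S : seq (V * R)) : Prop :=
  forall C : CT,
    (1 - eps) * cost Q C <= wcost S C /\ wcost S C <= (1 + eps) * cost Q C.
End Coresets.

Definition recovery_vector (R : realFieldType) (s n : nat) (A : 'M[R]_(s, n))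
    (delta : R) (Rs : {set 'I_s}) (b : 'I_s -> R) : Prop :=
  (forall i, i \in Rs -> 0 <= b i) /\
  (forall j : 'I_n, 1 <= \sum_(i in Rs) b i * A i j <= 1 + delta).

Definition straggler_resilient (R : realFieldType) (s n t : nat)
    (A : 'M[R]_(s, n)) (delta : R) : Prop :=
  forall Rs : {set 'I_s}, (s - t <= #|Rs|)%N -> exists b, recovery_vector A delta Rs b.

Definition Pi (R : realFieldType) (d s n : nat) (A : 'M[R]_(s, n))
    (p : 'I_n -> 'rV[R]_d) (i : 'I_s) : seq 'rV[R]_d :=
  [seq p j | j <- enum 'I_n & A i j == 1].

Definition disj_union (R : realFieldType) (V : Type) (s : nat) (Rs : {set 'I_s})
    (S : 'I_s -> seq V) (w : 'I_s -> V -> R) (b : 'I_s -> R) : seq (V * R) :=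
  flatten [seq [seq (c, b i * w i c) | c <- S i] | i <- enum Rs].

(* Main.v *)
Require Import Defs.
From mathcomp Require Import all_boot all_order all_algebra.
From mathcomp Require Import lra.
Import Order.TTheory GRing.Theory Num.Theory.
Local Open Scope ring_scope.

Theorem lemma3 (R : realFieldType) (d n s t : nat)
    (CT : Type) (D : 'rV[R]_d -> CT -> R) (D_ge0 : forall x C, 0 <= D x C)
    (p : 'I_n -> 'rV[R]_d) (p_inj : injective p)
    (delta eps : R) (A : 'M[R]_(s, n))
    (S : 'I_s -> seq 'rV[R]_d) (w : 'I_s -> 'rV[R]_d -> R)
    (Rs : {set 'I_s}) (b : 'I_s -> R) :
  (t < s)%N -> 0 < delta ->
  (forall i j, A i j = 0 \/ A i j = 1) ->
  straggler_resilient t A delta ->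
  (s - t <= #|Rs|)%N ->
  recovery_vector A delta Rs b ->
  0 < eps -> eps < 1 / 3 ->
  (forall i, i \in Rs -> uniq (S i) /\
     is_coreset D eps (Pi A p i) (wset (S i) (w i))) ->
  is_coreset D (2 * (eps + delta)) [seq p j | j <- enum 'I_n]
    (disj_union Rs S w b).
Proof.
move=> _ _ A01 _ _ [b0 bA] e0 e3 Hc C.
have Ew : wcost D (disj_union Rs S w b) C =
   \sum_(i in Rs) b i * wcost D (wset (S i) (w i)) C.
  rewrite /wcost /disj_union big_flatten /= big_map big_enum /=.
  apply: eq_bigr => i _; rewrite /wset !big_map mulr_sumr.
  by apply: eq_bigr => c _ /=; rewrite mulrA.
have EP : forall i, cost D (Pi A p i) C = \sum_j A i j * D (p j) C.
  move=> i; rewrite /cost /Pi big_map big_filter big_mkcond big_enum /=.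
  apply: eq_bigr => j _; case: (A01 i j) => ->; rewrite ?eqxx ?mul1r //.
  by rewrite mul0r eq_sym (negbTE (oner_neq0 R)).
have E0 : cost D [seq p j | j <- enum 'I_n] C = \sum_j D (p j) C.
  by rewrite /cost big_map big_enum.
have EB : \sum_(i in Rs) b i * cost D (Pi A p i) C =
   \sum_j (\sum_(i in Rs) b i * A i j) * D (p j) C.
  under eq_bigr => i _ do rewrite EP mulr_sumr.
  rewrite exchange_big /=; apply: eq_bigr => j _; rewrite mulr_suml.
  by apply: eq_bigr => i _; rewrite mulrA.
have c0 : 0 <= cost D [seq p j | j <- enum 'I_n] C by rewrite E0 sumr_ge0.
have L1 : cost D [seq p j | j <- enum 'I_n] C <= \sum_(i in Rs) b i * cost D (Pi A p i) C.
  rewrite E0 EB; apply: ler_sum => j _.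
  rewrite -{1}(mul1r (D _ _)); apply: ler_wpM2r => //.
  by case/andP: (bA j).
have L2 : \sum_(i in Rs) b i * cost D (Pi A p i) C <= (1 + delta) * cost D [seq p j | j <- enum 'I_n] C.
  rewrite E0 EB mulr_sumr; apply: ler_sum => j _.
  apply: ler_wpM2r => //; by case/andP: (bA j).
have U1 : wcost D (disj_union Rs S w b) C <= (1 + eps) * \sum_(i in Rs) b i * cost D (Pi A p i) C.
  rewrite Ew mulr_sumr; apply: ler_sum => i iR.
  rewrite mulrCA; apply: ler_wpM2l; first exact: b0.
  by case: (Hc i iR) => _ /(_ C) [].
have V1 : (1 - eps) * \sum_(i in Rs) b i * cost D (Pi A p i) C <= wcost D (disj_union Rs S w b) C.
  rewrite Ew mulr_sumr; apply: ler_sum => i iR.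
  rewrite mulrCA; apply: ler_wpM2l; first exact: b0.
  by case: (Hc i iR) => _ /(_ C) [].
set T := \sum_(i in Rs) _ in L1 L2 U1 V1.
set W := wcost _ _ _ in U1 V1 *.
split; nra.
Qed.
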